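(* Let $n>2$ and let $M_n$ be the graph defined below. For every $k>0$ and all $i\ne j$ in $\{1,\dots,n\}$, the graph $\sigma^{ij}_{\bowtie}(M_n)$ is not a $k$-polygon-circle graph.
   Context: $M_n$ has $6n$ nodes $v_1,\dots,v_{6n}$: the nodes $v_1,\dots,v_{4n}$ form a path (edges $\{v_t,v_{t+1}\}$, $1\le t<4n$), and for each $i\in\{1,\dots,n\}$ there are the additional edges $\{v_{4i-3},v_{4n+i}\}$, $\{v_{4i-2},v_{5n+i}\}$ and $\{v_{4n+i},v_{5n+i}\}$. For $i\in\{1,\dots,n\}$, $H_i$ is the subgraph with vertices $v_{4n+i},v_{5n+i}$ and the edge between them, and $\sigma_i:V(H_1)\to V(H_i)$ is the isomorphism with $\sigma_i(v_{4n+1})=v_{5n+i}$, $\sigma_i(v_{5n+1})=v_{4n+i}$; $\sigma^{ij}=\sigma_i\circ\sigma_j^{-1}$. Crossing: given a graph $G$ and two independent isomorphic subgraphs $H=(V_1,E_1)$, $H'=(V_2,E_2)$ (disjoint vertex sets, no edges of $G$ between them) with isomorphism $\sigma:V_1\to V_2$, the crossing $\sigma_{\bowtie}(G)$ is obtained from $G$ by replacing every pair of edges $\{u,v\}\in E_1$, $\{\sigma(u),\sigma(v)\}\in E_2$ by the pair $\{u,\sigma(v)\}$, $\{\sigma(u),v\}$. A $k$-polygon-circle graph is the intersection graph of a family of convex polygons with $k$ vertices, all vertices lying on a common circle. *)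

(* Defs.v *)
From HB Require Import structures.
From mathcomp Require Import all_boot all_order all_algebra.
From mathcomp Require Import Rstruct.
Set Implicit Arguments. Unset Strict Implicit. Unset Printing Implicit Defensive.
Import Order.TTheory GRing.Theory Num.Theory.

(* directed version of the edge list of M_n, on 1-based labels *)
Definition Medge_dir (n a b : nat) : bool :=
  ((1 <= a) && (a < 4 * n) && (b == a.+1)) ||
  has (fun i => [|| (a == 4 * i - 3) && (b == 4 * n + i),
                    (a == 4 * i - 2) && (b == 5 * n + i)
                  | (a == 4 * n + i) && (b == 5 * n + i)]) (iota 1 n).

Definition Medge (n a b : nat) : bool := Medge_dir n a b || Medge_dir n b a.

(* vertex x : 'I_(6n) is v_{x+1} *)
Definition M (n : nat) : rel 'I_(6 * n) :=
  fun x y => Medge n (val x).+1 (val y).+1.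

Definition H (n i : nat) : rel 'I_(6 * n) :=
  fun x y => let a := (val x).+1 in let b := (val y).+1 in
  ((a == 4 * n + i) && (b == 5 * n + i)) || ((b == 4 * n + i) && (a == 5 * n + i)).

Definition liftv (n : nat) (f : nat -> nat) (x : 'I_(6 * n)) : 'I_(6 * n) :=
  insubd x (f (val x).+1).-1.

(* sigma_i : V(H_1) -> V(H_i), v_{4n+1} |-> v_{5n+i}, v_{5n+1} |-> v_{4n+i}
   (extended by the identity outside V(H_1)) *)
Definition sigma_nat (n i a : nat) : nat :=
  if a == 4 * n + 1 then 5 * n + i
  else if a == 5 * n + 1 then 4 * n + i else a.
Definition sigma_inv_nat (n j a : nat) : nat :=
  if a == 5 * n + j then 4 * n + 1
  else if a == 4 * n + j then 5 * n + 1 else a.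

(* sigma^{ij} = sigma_i o sigma_j^{-1} : V(H_j) -> V(H_i) *)
Definition sigma_ij (n i j : nat) : 'I_(6 * n) -> 'I_(6 * n) :=
  @liftv n (fun a => sigma_nat n i (sigma_inv_nat n j a)).

(* G = (T, e); H = (V1, E1), H' = (V2, E2), sigma : V1 -> V2 an isomorphism.
   Every pair of edges {u,v} in E1, {sigma u, sigma v} in E2 is replaced by
   {u, sigma v}, {sigma u, v}. *)
Definition crossing (T : finType) (e E1 E2 : rel T) (sigma : T -> T) : rel T :=
  fun x y =>
    let removed := [exists u, exists v,
          [&& E1 u v, E2 (sigma u) (sigma v) &
              ((x == u) && (y == v)) || ((x == sigma u) && (y == sigma v))]] in
    let added := [exists u, exists v,
          [&& E1 u v, E2 (sigma u) (sigma v) &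
              ((x == u) && (y == sigma v)) || ((x == sigma u) && (y == v))]] in
    (e x y && ~~ removed) || added.

Local Open Scope ring_scope.
Local Notation R := Rdefinitions.R.

Definition in_hull (k : nat) (P : 'I_k -> R * R) (p : R * R) : Prop :=
  exists w : 'I_k -> R,
    [/\ forall t, 0 <= w t, \sum_(t < k) w t = 1,
        p.1 = \sum_(t < k) w t * (P t).1 & p.2 = \sum_(t < k) w t * (P t).2].

Definition k_polygon_circle (k : nat) (T : finType) (e : rel T) : Prop :=
  exists (c : R * R) (r : R) (P : T -> 'I_k -> R * R),
    [/\ 0 < r,
        forall x, injective (P x),
        forall x t, ((P x t).1 - c.1) ^+ 2 + ((P x t).2 - c.2) ^+ 2 = r ^+ 2
      & forall x y, x != y ->
          (e x y <-> exists p, in_hull (P x) p /\ in_hull (P y) p)].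

Arguments M n : clear implicits.
Arguments H n i : clear implicits.
Arguments sigma_ij n i j : clear implicits.

(* Main.v *)
Require Import Defs.
From mathcomp Require Import all_boot all_order all_algebra.
From mathcomp Require Import ring lra zify.
From mathcomp Require Import Rstruct.
Set Implicit Arguments. Unset Strict Implicit. Unset Printing Implicit Defensive.
Import Order.TTheory GRing.Theory Num.Theory.

Module PComb.
Local Open Scope ring_scope.
Local Notation R := Rdefinitions.R.

Section Comb.
Definition minf (a : R) (s : seq R) := foldr (fun x m => if x < m then x else m) a s.
Definition maxf (a : R) (s : seq R) := foldr (fun x m => if m < x then x else m) a s.
Definition mn (s : seq R) := minf (head 0 s) s.
Definition mx (s : seq R) := maxf (head 0 s) s.

Lemma minf_le a s : minf a s <= a /\ forall x, x \in s -> minf a s <= x.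
Proof.
elim: s => [|y s [IH1 IH2]] /=; first by split=> //.
case: ifP => hy; split.
- lra.
- move=> x; rewrite inE => /orP[/eqP->|/IH2]; lra.
- lra.
- move=> x; rewrite inE => /orP[/eqP->|/IH2]; rewrite ?lexx //; move/negbT: hy; rewrite -leNgt; lra.
Qed.

Lemma minf_mem a s : minf a s \in a :: s.
Proof.
elim: s => [|y s IH] /=; first by rewrite inE.
case: ifP => _; first by rewrite !inE eqxx orbT.
move: IH; rewrite !inE => /orP[->//|->]; by rewrite !orbT.
Qed.

Lemma maxf_le a s : a <= maxf a s /\ forall x, x \in s -> x <= maxf a s.
Proof.
elim: s => [|y s [IH1 IH2]] /=; first by split=> //.
case: ifP => hy; split.
- lra.
- move=> x; rewrite inE => /orP[/eqP->|/IH2]; lra.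
- lra.
- move=> x; rewrite inE => /orP[/eqP->|/IH2]; rewrite ?lexx //; move/negbT: hy; rewrite -leNgt; lra.
Qed.

Lemma maxf_mem a s : maxf a s \in a :: s.
Proof.
elim: s => [|y s IH] /=; first by rewrite inE.
case: ifP => _; first by rewrite !inE eqxx orbT.
move: IH; rewrite !inE => /orP[->//|->]; by rewrite !orbT.
Qed.

Lemma mn_le s x : x \in s -> mn s <= x.
Proof. by move=> hx; have [_ ->] := minf_le (head 0 s) s. Qed.
Lemma mx_ge s x : x \in s -> x <= mx s.
Proof. by move=> hx; have [_ ->] := maxf_le (head 0 s) s. Qed.
Lemma mn_mem s : s != [::] -> mn s \in s.
Proof.
case: s => [//|y s] _; rewrite /mn [head _ _]/=.
have := minf_mem y (y :: s); rewrite inE => /orP[/eqP->|//]; by rewrite inE eqxx.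
Qed.
Lemma mx_mem s : s != [::] -> mx s \in s.
Proof.
case: s => [//|y s] _; rewrite /mx [head _ _]/=.
have := maxf_mem y (y :: s); rewrite inE => /orP[/eqP->|//]; by rewrite inE eqxx.
Qed.

Definition avoid (P : seq R) (q : R) := (q < mn P) || (mx P < q).
Definition sepI (P Q : seq R) := all (avoid P) Q || all (avoid Q) P.

Lemma sepIC P Q : sepI P Q = sepI Q P.
Proof. by rewrite /sepI orbC. Qed.

Lemma sepI_disj P Q x : sepI P Q -> x \in P -> x \in Q -> False.
Proof.
move=> /orP[/allP h|/allP h] hP hQ.
- have := h x hQ; rewrite /avoid; have := mn_le hP; have := mx_ge hP.
  move=> h1 h2 /orP[]; lra.
- have := h x hP; rewrite /avoid; have := mn_le hQ; have := mx_ge hQ.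
  move=> h1 h2 /orP[]; lra.
Qed.

Lemma avoid_sub P P' q : P' != [::] -> {subset P' <= P} -> avoid P q -> avoid P' q.
Proof.
move=> hne hs; rewrite /avoid.
have h1 := mn_le (hs _ (mn_mem hne)); have h2 := mx_ge (hs _ (mx_mem hne)).
case/orP=> h; apply/orP; [left|right]; lra.
Qed.

Lemma sepI_sub (P Q P' Q' : seq R) : P' != [::] -> Q' != [::] ->
  {subset P' <= P} -> {subset Q' <= Q} -> sepI P Q -> sepI P' Q'.
Proof.
move=> hP hQ sP sQ /orP[/allP h|/allP h]; apply/orP; [left|right]; apply/allP=> x hx.
- by apply: avoid_sub hP sP _; apply: h; apply: sQ.
- by apply: avoid_sub hQ sQ _; apply: h; apply: sP.
Qed.

Lemma notsep_witness P Q : ~~ sepI P Q -> exists2 q, q \in Q & mn P <= q <= mx P.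
Proof.
rewrite /sepI negb_or => /andP[h _]; move: h; rewrite -has_predC => /hasP[q hq].
rewrite /= /avoid negb_or -!leNgt => /andP[h1 h2]; exists q => //; by rewrite h1 h2.
Qed.

Lemma union_helper (P Q R0 : seq R) q : P != [::] -> R0 != [::] ->
  all (avoid P) R0 -> q \in Q -> mn P <= q <= mx P -> avoid R0 q ->
  all (avoid R0) P.
Proof.
move=> hP hR /allP hRP hq /andP[q1 q2] hqR.
have a1 := hRP _ (mn_mem hR); have a2 := hRP _ (mx_mem hR).
have b1 : mn R0 <= mx R0 by apply: mn_le; apply: mx_mem.
have c1 : mn P <= mx P by apply: mn_le; apply: mx_mem.
apply/allP => p hp; have p1 := mn_le hp; have p2 := mx_ge hp.
move: a1 a2 hqR; rewrite /avoid => /orP[] a1 /orP[] a2 /orP[] h; apply/orP; lra.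
Qed.

Lemma union_sep (P Q R0 : seq R) : P != [::] -> Q != [::] -> R0 != [::] ->
  ~~ sepI P Q -> sepI P R0 -> sepI Q R0 -> sepI (P ++ Q) R0.
Proof.
move=> hP hQ hR hPQ.
have [q hq hqP] := notsep_witness hPQ.
have [p hp hpQ] : exists2 p, p \in P & mn Q <= p <= mx Q.
  by apply: notsep_witness; rewrite sepIC.
have hPQne : P ++ Q != [::] by case: (P) hP.
have m1 := mn_mem hPQne; have m2 := mx_mem hPQne.
rewrite mem_cat in m1; rewrite mem_cat in m2.
have l1 : mn (P ++ Q) <= mn P by apply: mn_le; rewrite mem_cat mn_mem.
have l2 : mn (P ++ Q) <= mn Q by apply: mn_le; rewrite mem_cat mn_mem ?orbT.
have l3 : mx P <= mx (P ++ Q) by apply: mx_ge; rewrite mem_cat mx_mem.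
have l4 : mx Q <= mx (P ++ Q) by apply: mx_ge; rewrite mem_cat mx_mem ?orbT.
have e1 : mn P <= mn (P ++ Q) \/ mn Q <= mn (P ++ Q).
  move: m1 => /orP[h|h]; [left|right]; by apply: mn_le.
have e2 : mx (P ++ Q) <= mx P \/ mx (P ++ Q) <= mx Q.
  move: m2 => /orP[h|h]; [left|right]; by apply: mx_ge.
move=> /orP[hRP|hPR] /orP[hRQ|hQR].
- apply/orP; left; apply/allP => r hr.
  have := allP hRP r hr; have := allP hRQ r hr; rewrite /avoid.
  move: hqP hpQ => /andP[] ? ? /andP[] ? ?.
  have := mn_le hq; have := mx_ge hq; have := mn_le hp; have := mx_ge hp.
  move=> ? ? ? ? /orP[] ? /orP[] ?; apply/orP.
  + left; case: e1 => ?; lra.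
  + exfalso; lra.
  + exfalso; lra.
  + right; case: e2 => ?; lra.
- apply/orP; right; rewrite all_cat; apply/andP; split=> //.
  exact: (union_helper hP hR hRP hq hqP (allP hQR q hq)).
- apply/orP; right; rewrite all_cat; apply/andP; split=> //.
  exact: (union_helper hQ hR hRQ hp hpQ (allP hPR p hp)).
- by apply/orP; right; rewrite all_cat hPR hQR.
Qed.

Lemma ends (X : seq R) b : X != [::] -> b \notin X ->
  exists e1 e2, [/\ e1 \in X, e2 \in X &
   ((e1 < b < e2) /\ (forall x, x \in X -> x <= e1 \/ e2 <= x)) \/
   ((forall x, x \in X -> e1 <= x <= e2) /\ (b < e1 \/ e2 < b))].
Proof.
move=> hX hb.
have hbx : forall x, x \in X -> x < b \/ b < x.
  move=> x hx; have : x != b by apply: contraNneq hb => <-.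
  rewrite neq_lt => /orP[]; auto.
case hL: (filter (fun x => x < b) X) => [|l L].
- exists (mn X), (mx X); split; [exact: mn_mem|exact: mx_mem|right]; split.
  + by move=> x hx; rewrite mn_le // mx_ge.
  + left; have := hbx _ (mn_mem hX); case=> // h.
    have : mn X \in filter (fun x => x < b) X by rewrite mem_filter h mn_mem.
    by rewrite hL.
case hU: (filter (fun x => b < x) X) => [|u U].
- exists (mn X), (mx X); split; [exact: mn_mem|exact: mx_mem|right]; split.
  + by move=> x hx; rewrite mn_le // mx_ge.
  + right; have := hbx _ (mx_mem hX); case=> // h.
    have : mx X \in filter (fun x => b < x) X by rewrite mem_filter h mx_mem.
    by rewrite hU.
set Ls := l :: L; set Us := u :: U.
have hLs : Ls != [::] by [].
have hUs : Us != [::] by [].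
have m1 : mx Ls \in filter (fun x => x < b) X by rewrite hL; exact: mx_mem.
have m2 : mn Us \in filter (fun x => b < x) X by rewrite hU; exact: mn_mem.
rewrite mem_filter in m1; rewrite mem_filter in m2.
case/andP: m1 => m1a m1b; case/andP: m2 => m2a m2b.
exists (mx Ls), (mn Us); split => //; left; split.
- by rewrite m1a m2a.
- move=> x hx; case: (hbx x hx) => h; [left|right].
  + apply: mx_ge; rewrite /Ls -hL mem_filter h hx //.
  + apply: mn_le; rewrite /Us -hU mem_filter h hx //.
Qed.

Lemma rail (X Xt S W : seq R) b e1 e2 :
  e1 \in S -> e2 \in S -> S != [::] ->
  e1 \notin Xt -> e2 \notin Xt -> {subset Xt <= X} -> Xt != [::] ->
  b \in W -> W != [::] ->
  ((e1 < b < e2) /\ (forall x, x \in X -> x <= e1 \/ e2 <= x)) \/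
   ((forall x, x \in X -> e1 <= x <= e2) /\ (b < e1 \/ e2 < b)) ->
  sepI W S -> sepI W Xt.
Proof.
move=> he1 he2 hS n1 n2 sX hXt hb hW hcase.
have w1 := mn_le hb; have w2 := mx_ge hb.
have s1 := mn_le he1; have s2 := mx_ge he1; have s3 := mn_le he2; have s4 := mx_ge he2.
have xne : forall x, x \in Xt -> x != e1 /\ x != e2.
  by move=> x hx; split; [apply: (contraNneq _ n1) | apply: (contraNneq _ n2)] => <-.
move=> /orP[/allP hSW | /allP hWS].
- have a1 := hSW _ he1; have a2 := hSW _ he2; move: a1 a2; rewrite /avoid.
  case: hcase => [[/andP[hb1 hb2] hX]|[hX hb']].
  + move=> /orP[] a1 /orP[] a2; try (exfalso; lra).
    apply/orP; left; apply/allP => x hx; rewrite /avoid.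
    have [ne1 ne2] := xne _ hx.
    case: (hX x (sX _ hx)) => h; apply/orP; [left|right].
    * have : x < e1 by rewrite lt_neqAle ne1 h. lra.
    * have : e2 < x by rewrite lt_neqAle eq_sym ne2 h. lra.
  + move=> a1 a2; apply/orP; left; apply/allP => x hx; rewrite /avoid.
    have [ne1 ne2] := xne _ hx; have /andP[h1 h2] := hX x (sX _ hx).
    have h1' : e1 < x by rewrite lt_neqAle eq_sym ne1 h1.
    have h2' : x < e2 by rewrite lt_neqAle ne2 h2.
    move: a1 a2 => /orP[] a1 /orP[] a2; apply/orP; case: hb' => ?; try (exfalso; lra); try (left; lra); right; lra.
- have a1 := hWS _ hb; move: a1; rewrite /avoid.
  case: hcase => [[/andP[hb1 hb2] hX]|[hX hb']].
  + move=> /orP[] ?; exfalso; lra.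
  + move=> _; apply/orP; right; apply/allP => w hw; rewrite /avoid.
    have := hWS _ hw; rewrite /avoid.
    have m1 := mn_mem hXt; have m2 := mx_mem hXt.
    have [ne1 _] := xne _ m1; have [_ ne2] := xne _ m2.
    have /andP[h1 _] := hX _ (sX _ m1); have /andP[_ h2] := hX _ (sX _ m2).
    have h1' : e1 < mn Xt by rewrite lt_neqAle eq_sym ne1 h1.
    have h2' : mx Xt < e2 by rewrite lt_neqAle ne2 h2.
    move=> /orP[] ?; apply/orP; [left|right]; lra.
Qed.

Lemma core (X1 X2 X3 W1 W2 W3 : seq R) b :
  X1 != [::] -> X2 != [::] -> X3 != [::] ->
  b \in W1 -> b \in W2 -> b \in W3 ->
  sepI W1 (X2 ++ X3) -> sepI W2 (X1 ++ X3) -> sepI W3 (X1 ++ X2) ->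
  ~~ sepI W1 X1 -> ~~ sepI W2 X2 -> ~~ sepI W3 X3 ->
  (forall x, x \in X1 -> x \in X2 -> False) ->
  (forall x, x \in X1 -> x \in X3 -> False) ->
  (forall x, x \in X2 -> x \in X3 -> False) -> False.
Proof.
move=> h1 h2 h3 b1 b2 b3 s1 s2 s3 n1 n2 n3 d12 d13 d23.
set X := X1 ++ X2 ++ X3.
have hX : X != [::] by rewrite /X; case: (X1) h1.
have hbX : b \notin X.
  rewrite /X !mem_cat; apply/negP => /orP[h|/orP[h|h]].
  - by apply: (sepI_disj s2 b2); rewrite mem_cat h.
  - by apply: (sepI_disj s1 b1); rewrite mem_cat h.
  - by apply: (sepI_disj s1 b1); rewrite mem_cat h orbT.
have [e1 [e2 [he1 he2 hc]]] := ends hX hbX.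
have ne : forall W : seq R, b \in W -> W != [::] by move=> W; case: W.
have key : forall (Xt S W : seq R), {subset Xt <= X} -> Xt != [::] ->
    (forall e, e \in X -> e \notin Xt -> e \in S) -> S != [::] -> b \in W ->
    sepI W S -> ~~ sepI W Xt -> (e1 \in Xt) || (e2 \in Xt).
  move=> Xt S W sX hXt hS hSne hbW sWS nWX.
  apply/negPn/negP => /norP[q1 q2].
  move/negP: nWX; apply.
  exact: (rail (hS _ he1 q1) (hS _ he2 q2) hSne q1 q2 sX hXt hbW (ne _ hbW) hc sWS).
have sub1 : {subset X1 <= X} by move=> x hx; rewrite /X !mem_cat hx.
have sub2 : {subset X2 <= X} by move=> x hx; rewrite /X !mem_cat hx orbT.
have sub3 : {subset X3 <= X} by move=> x hx; rewrite /X !mem_cat hx !orbT.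
have k1 : (e1 \in X1) || (e2 \in X1).
  apply: (key X1 (X2 ++ X3) W1) => //; last by case: (X2) h2.
  by move=> e; rewrite /X !mem_cat; case: (e \in X1); case: (e \in X2); case: (e \in X3).
have k2 : (e1 \in X2) || (e2 \in X2).
  apply: (key X2 (X1 ++ X3) W2) => //; last by case: (X1) h1.
  by move=> e; rewrite /X !mem_cat; case: (e \in X1); case: (e \in X2); case: (e \in X3).
have k3 : (e1 \in X3) || (e2 \in X3).
  apply: (key X3 (X1 ++ X2) W3) => //; last by case: (X1) h1.
  by move=> e; rewrite /X !mem_cat; case: (e \in X1); case: (e \in X2); case: (e \in X3).
move: k1 k2 k3 => /orP[] a /orP[] c /orP[] d; by [apply: d12 a c|apply: d13 a d|apply: d23 c d].
Qed.

Lemma chain_sep (f : nat -> seq R) (S : seq R) (l0 : nat) (ls : seq nat) :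
  (forall x, f x != [::]) -> S != [::] ->
  path (fun x y => ~~ sepI (f x) (f y)) l0 ls ->
  all (fun l => sepI (f l) S) (l0 :: ls) -> sepI (flatten (map f (l0 :: ls))) S.
Proof.
move=> hf hS; elim: ls l0 => [|l1 ls IH] l0 /=.
- by move=> _ /andP[h _]; rewrite cats0.
- move=> /andP[h01 hp] /andP[h0 hall].
  have IH' := IH l1 hp hall; move: IH'; rewrite /= => IH'.
  apply: union_sep => //.
  + case: (f l1) (hf l1) => // ? ? _; by [].
  + apply: contra h01 => hs; apply: sepI_sub hs => //.
    by move=> x hx; rewrite mem_cat hx.
Qed.

Lemma star_sep (Z X1 A0 X2 : seq R) : Z != [::] -> X1 != [::] -> A0 != [::] -> X2 != [::] ->
  ~~ sepI X1 A0 -> ~~ sepI A0 X2 -> sepI Z X1 -> sepI Z A0 -> sepI Z X2 -> sepI Z (X1 ++ X2).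
Proof.
move=> hZ h1 hA h2 n1 n2 s1 sA s2.
have e1 : sepI (X1 ++ A0) Z by apply: union_sep => //; rewrite sepIC.
have e2 : sepI ((X1 ++ A0) ++ X2) Z.
  apply: union_sep => //; [by case: (X1) h1|idtac|by rewrite sepIC].
  apply: contra n2 => hs; apply: sepI_sub hs => //; by move=> x hx; rewrite mem_cat hx orbT.
rewrite sepIC; apply: sepI_sub e2 => //; first by case: (X1) h1.
by move=> x; rewrite !mem_cat => /orP[->|->]; rewrite ?orbT.
Qed.
End Comb.

End PComb.
Import PComb.

Module PGeo.
Local Open Scope ring_scope.
Local Notation R := Rdefinitions.R.

Definition orient (p q w : R * R) : R :=
  (q.1 - p.1) * (w.2 - p.2) - (q.2 - p.2) * (w.1 - p.1).
Definition al (y : R) : R := (y ^+ 2 - 1) / (y ^+ 2 + 1).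
Definition be (y : R) : R := (2 * y) / (y ^+ 2 + 1).
Definition F (c n : R * R) (r y : R) : R * R :=
  (c.1 + r * (al y * n.1 - be y * n.2), c.2 + r * (al y * n.2 + be y * n.1)).
Definition cyc (s x t : R) : R := (s - x) * (x - t) * (t - s).

Lemma sq1_neq0 (y : R) : y ^+ 2 + 1 != 0.
Proof. have : 0 <= y ^+ 2 by apply: sqr_ge0. move=> h; apply/negP => /eqP; lra. Qed.

Lemma orientF c n r s t x :
  orient (F c n r s) (F c n r t) (F c n r x) =
  4 * r ^+ 2 * (n.1 ^+ 2 + n.2 ^+ 2) * cyc s x t /
    ((s ^+ 2 + 1) * (t ^+ 2 + 1) * (x ^+ 2 + 1)).
Proof.
rewrite /orient /F /al /be /cyc /=.
have := sq1_neq0 s; have := sq1_neq0 t; have := sq1_neq0 x.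
move=> hx ht hs.
field. by rewrite hx ht hs.
Qed.

Lemma reparam (a b : R) : a != 1 -> a ^+ 2 + b ^+ 2 = 1 ->
  al (b / (1 - a)) = a /\ be (b / (1 - a)) = b.
Proof.
move=> ha hab.
have hd : 1 - a != 0 by rewrite subr_eq0 eq_sym.
have hb2 : b ^+ 2 = 1 - a ^+ 2 by lra.
have e1 : (b / (1 - a)) ^+ 2 + 1 = 2 / (1 - a).
  rewrite expr_div_n hb2. field. exact: hd.
have e2 : (b / (1 - a)) ^+ 2 - 1 = 2 * a / (1 - a).
  rewrite expr_div_n hb2. field. exact: hd.
rewrite /al /be e1 e2; split; field; rewrite ?hd //.
Qed.

Definition tau (c n : R * R) (r : R) (p : R * R) : R :=
  let u1 := (p.1 - c.1) / r in let u2 := (p.2 - c.2) / r in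
  (n.1 * u2 - n.2 * u1) / (1 - (u1 * n.1 + u2 * n.2)).

Lemma circle_param c n r (p : R * R) : 0 < r -> n.1 ^+ 2 + n.2 ^+ 2 = 1 ->
  (p.1 - c.1) ^+ 2 + (p.2 - c.2) ^+ 2 = r ^+ 2 ->
  p != (c.1 + r * n.1, c.2 + r * n.2) -> p = F c n r (tau c n r p).
Proof.
move=> hr hn hp hne.
set u1 := (p.1 - c.1) / r; set u2 := (p.2 - c.2) / r.
have hr0 : r != 0 by rewrite gt_eqF.
have hu : u1 ^+ 2 + u2 ^+ 2 = 1.
  rewrite /u1 /u2 !expr_div_n -mulrDl hp divff //. by rewrite expf_neq0.
set a := u1 * n.1 + u2 * n.2; set b := n.1 * u2 - n.2 * u1.
have hab : a ^+ 2 + b ^+ 2 = 1.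
  have -> : a ^+ 2 + b ^+ 2 = (u1 ^+ 2 + u2 ^+ 2) * (n.1 ^+ 2 + n.2 ^+ 2) by rewrite /a /b; ring.
  by rewrite hu hn mulr1.
have ha : a != 1.
  apply/negP => /eqP ha1.
  have h0 : (u1 - n.1) ^+ 2 + (u2 - n.2) ^+ 2 = 0.
    have -> : (u1 - n.1) ^+ 2 + (u2 - n.2) ^+ 2 = (u1 ^+ 2 + u2 ^+ 2) + (n.1 ^+ 2 + n.2 ^+ 2) - 2 * a by rewrite /a; ring.
    rewrite hu hn ha1; ring.
  have s1 := sqr_ge0 (u1 - n.1); have s2 := sqr_ge0 (u2 - n.2).
  have z1 : (u1 - n.1) ^+ 2 = 0 by lra.
  have z2 : (u2 - n.2) ^+ 2 = 0 by lra.
  move/eqP: z1; rewrite sqrf_eq0 subr_eq0 => /eqP z1.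
  move/eqP: z2; rewrite sqrf_eq0 subr_eq0 => /eqP z2.
  move/negP: hne; apply; apply/eqP.
  rewrite -z1 -z2 /u1 /u2.
  case: (p) => p1 p2 /=; congr (_, _); field; exact: hr0.
have [e1 e2] := reparam ha hab.
rewrite /tau -/u1 -/u2 -/a -/b /F e1 e2.
have h1 : a * n.1 - b * n.2 = u1 * (n.1 ^+ 2 + n.2 ^+ 2) by rewrite /a /b; ring.
have h2 : a * n.2 + b * n.1 = u2 * (n.1 ^+ 2 + n.2 ^+ 2) by rewrite /a /b; ring.
rewrite h1 h2 hn !mulr1 /u1 /u2.
case: p {hp hne u1 u2 hu a b hab ha e1 e2 h1 h2} => p1 p2 /=.
congr (_, _); field; exact: hr0.
Qed.

Definition aff (al0 be0 ga : R) (q : R * R) : R := al0 * q.1 + be0 * q.2 + ga.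

Lemma hull_aff k (A : 'I_k -> R * R) p al0 be0 ga :
  in_hull A p -> exists w : 'I_k -> R,
    [/\ forall t, 0 <= w t, \sum_(t < k) w t = 1 &
        aff al0 be0 ga p = \sum_(t < k) w t * aff al0 be0 ga (A t)].
Proof.
case=> w [w0 w1 e1 e2]; exists w; split => //.
rewrite /aff e1 e2.
have -> : \sum_(t < k) w t * (al0 * (A t).1 + be0 * (A t).2 + ga) =
   al0 * (\sum_(t < k) w t * (A t).1) + be0 * (\sum_(t < k) w t * (A t).2) + ga * \sum_(t < k) w t.
  rewrite !mulr_sumr -!big_split /=; apply: eq_bigr => t _; ring.
by rewrite w1 mulr1.
Qed.

Lemma hull_ge0 k (A : 'I_k -> R * R) p al0 be0 ga :
  in_hull A p -> (forall t, 0 <= aff al0 be0 ga (A t)) -> 0 <= aff al0 be0 ga p.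
Proof.
move=> h hA; have [w [w0 w1 ->]] := hull_aff al0 be0 ga h.
apply: sumr_ge0 => t _; exact: mulr_ge0.
Qed.

Lemma hull_lt0 k (A : 'I_k -> R * R) p al0 be0 ga :
  in_hull A p -> (forall t, aff al0 be0 ga (A t) < 0) -> aff al0 be0 ga p < 0.
Proof.
move=> h hA; have [w [w0 w1 ->]] := hull_aff al0 be0 ga h.
have [t0 /andP[_ ht0]] : exists t, true && (0 < w t).
  apply: psumr_neq0P => [t _|]; first exact: w0.
  by rewrite w1; apply/eqP; rewrite oner_eq0.
rewrite (bigD1 t0) //=.
have h1 : \sum_(t < k | t != t0) w t * aff al0 be0 ga (A t) <= 0.
  apply: sumr_le0 => t _; rewrite mulr_ge0_le0 //; exact: ltW.
have h2 : w t0 * aff al0 be0 ga (A t0) < 0 by rewrite pmulr_rlt0.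
lra.
Qed.

Lemma orient_aff (p q w : R * R) :
  orient p q w = aff (- (q.2 - p.2)) (q.1 - p.1) (- (q.1 - p.1) * p.2 + (q.2 - p.2) * p.1) w.
Proof. rewrite /orient /aff; ring. Qed.

Lemma orientF_sign c n r s t x : 0 < r -> n.1 ^+ 2 + n.2 ^+ 2 = 1 ->
  exists2 K, 0 < K & orient (F c n r s) (F c n r t) (F c n r x) = K * cyc s x t.
Proof.
move=> hr hn; rewrite orientF hn mulr1.
exists (4 * r ^+ 2 / ((s ^+ 2 + 1) * (t ^+ 2 + 1) * (x ^+ 2 + 1))).
- have ps : forall y : R, 0 < y ^+ 2 + 1.
    by move=> y; have := sqr_ge0 y; lra.
  apply: divr_gt0; first by apply: mulr_gt0 => //; apply: exprn_gt0.
  by rewrite !mulr_gt0.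
- by rewrite mulrAC.
Qed.

Lemma cyc_ge0 s x t : s <= x -> x <= t -> 0 <= cyc s x t.
Proof.
move=> h1 h2; rewrite /cyc.
have -> : (s - x) * (x - t) * (t - s) = (x - s) * (t - x) * (t - s) by ring.
by rewrite !mulr_ge0 // subr_ge0 //; apply: le_trans h2.
Qed.

Lemma cyc_lt0 s x t : s < t -> (x < s) || (t < x) -> cyc s x t < 0.
Proof.
move=> hst /orP[] h; rewrite /cyc.
- have -> : (s - x) * (x - t) * (t - s) = - ((s - x) * (t - x) * (t - s)) by ring.
  rewrite oppr_lt0 !mulr_gt0 // subr_gt0 //; exact: lt_trans hst.
- have -> : (s - x) * (x - t) * (t - s) = - ((x - s) * (x - t) * (t - s)) by ring.
  rewrite oppr_lt0 !mulr_gt0 // subr_gt0 //; exact: lt_trans h.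
Qed.

Definition pts k (a : 'I_k -> R) : seq R := map a (enum 'I_k).

Lemma pts_mem k (a : 'I_k -> R) t : a t \in pts a.
Proof. by rewrite /pts map_f // mem_enum. Qed.

Lemma pts_memP k (a : 'I_k -> R) x : x \in pts a -> exists t, x = a t.
Proof. by case/mapP => t _ ->; exists t. Qed.

Lemma hull_orient_ge0 k (A : 'I_k -> R * R) p q q' :
  in_hull A p -> (forall i, 0 <= orient q q' (A i)) -> 0 <= orient q q' p.
Proof. move=> h hA; rewrite orient_aff; apply: hull_ge0 h _ => i; rewrite -orient_aff; exact: hA. Qed.

Lemma hull_orient_lt0 k (A : 'I_k -> R * R) p q q' :
  in_hull A p -> (forall i, orient q q' (A i) < 0) -> orient q q' p < 0.
Proof. move=> h hA; rewrite orient_aff; apply: hull_lt0 h _ => i; rewrite -orient_aff; exact: hA. Qed.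

Lemma sep_disjoint1 c n r k (A B : 'I_k -> R * R) (a b : 'I_k -> R) p :
  0 < r -> n.1 ^+ 2 + n.2 ^+ 2 = 1 ->
  (forall t, A t = F c n r (a t)) -> (forall t, B t = F c n r (b t)) ->
  mn (pts a) < mx (pts a) -> all (avoid (pts a)) (pts b) ->
  in_hull A p -> in_hull B p -> False.
Proof.
move=> hr hn hA hB hlt /allP hav hpA hpB.
set s := mn (pts a); set t := mx (pts a).
have h1 : 0 <= orient (F c n r s) (F c n r t) p.
  apply: hull_orient_ge0 hpA _ => i; rewrite hA.
  have [K hK ->] := orientF_sign c s t (a i) hr hn.
  apply: mulr_ge0; first exact: ltW.
  by apply: cyc_ge0; [apply: mn_le | apply: mx_ge]; apply: pts_mem.
have h2 : orient (F c n r s) (F c n r t) p < 0.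
  apply: hull_orient_lt0 hpB _ => i; rewrite hB.
  have [K hK ->] := orientF_sign c s t (b i) hr hn.
  rewrite pmulr_rlt0 //; apply: cyc_lt0 => //.
  exact: hav (pts_mem b i).
lra.
Qed.

Lemma cross_pt (A A' B B' : R * R) :
  orient B B' A - orient B B' A' != 0 -> orient A A' B - orient A A' B' != 0 ->
  let l := orient B B' A / (orient B B' A - orient B B' A') in
  let m := orient A A' B / (orient A A' B - orient A A' B') in
  (1 - l) * A.1 + l * A'.1 = (1 - m) * B.1 + m * B'.1 /\
  (1 - l) * A.2 + l * A'.2 = (1 - m) * B.2 + m * B'.2.
Proof.
case: A A' B B' => [a1 a2] [a1' a2'] [b1 b2] [b1' b2'].
rewrite /orient /= => h1 h2; split; field; by rewrite h1 h2.
Qed.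

Lemma sum_if1 k (i : 'I_k) (f : 'I_k -> R) :
  \sum_(t < k) (if t == i then f t else 0) = f i.
Proof. by rewrite -big_mkcond /= big_pred1_eq. Qed.

Lemma sum_if1m k (i : 'I_k) (c : R) (f : 'I_k -> R) :
  \sum_(t < k) (if t == i then c else 0) * f t = c * f i.
Proof.
rewrite (eq_bigr (fun t => if t == i then c * f t else 0)); first exact: sum_if1.
by move=> t _; case: ifP => _; rewrite ?mul0r.
Qed.

Lemma hull1 k (A : 'I_k -> R * R) i : in_hull A (A i).
Proof.
exists (fun t => if t == i then 1 else 0); split.
- by move=> t; case: ifP.
- by rewrite (sum_if1 i (fun _ => 1)).
- by rewrite sum_if1m mul1r.
- by rewrite sum_if1m mul1r.
Qed.

Lemma hull2 k (A : 'I_k -> R * R) i j l : i != j -> 0 <= l <= 1 ->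
  in_hull A ((1 - l) * (A i).1 + l * (A j).1, (1 - l) * (A i).2 + l * (A j).2).
Proof.
move=> hij /andP[l0 l1].
exists (fun t => (if t == i then 1 - l else 0) + (if t == j then l else 0)); split.
- move=> t; apply: addr_ge0; case: ifP => _ //; lra.
- rewrite big_split /= (sum_if1 i (fun _ => 1 - l)) (sum_if1 j (fun _ => l)); ring.
- by rewrite (eq_bigr _ (fun t _ => mulrDl _ _ _)) big_split /= !sum_if1m.
- by rewrite (eq_bigr _ (fun t _ => mulrDl _ _ _)) big_split /= !sum_if1m.
Qed.

Lemma cyc_gt0 s x t : s < x -> x < t -> 0 < cyc s x t.
Proof.
move=> h1 h2; rewrite /cyc.
have -> : (s - x) * (x - t) * (t - s) = (x - s) * (t - x) * (t - s) by ring.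
by rewrite !mulr_gt0 // subr_gt0 //; apply: lt_trans h2.
Qed.

Lemma interleave_meet c n r k (A B : 'I_k -> R * R) (a b : 'I_k -> R) i1 i2 j1 j2 :
  0 < r -> n.1 ^+ 2 + n.2 ^+ 2 = 1 ->
  (forall t, A t = F c n r (a t)) -> (forall t, B t = F c n r (b t)) ->
  a i1 < b j1 -> b j1 < a i2 -> a i2 < b j2 ->
  exists p, in_hull A p /\ in_hull B p.
Proof.
move=> hr hn hA hB o1 o2 o3.
have ni : i1 != i2 by apply/negP => /eqP e; move: o1 o2; rewrite e => ? ?; lra.
have nj : j1 != j2 by apply/negP => /eqP e; move: o2 o3; rewrite e => ? ?; lra.
have [K1 hK1 eA] := orientF_sign c (b j1) (b j2) (a i1) hr hn.
have [K2 hK2 eA'] := orientF_sign c (b j1) (b j2) (a i2) hr hn.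
have [K3 hK3 eB] := orientF_sign c (a i1) (a i2) (b j1) hr hn.
have [K4 hK4 eB'] := orientF_sign c (a i1) (a i2) (b j2) hr hn.
rewrite -!hA -!hB in eA eA' eB eB'.
have c1 : cyc (b j1) (a i1) (b j2) < 0 by apply: cyc_lt0; [lra| rewrite o1].
have c2 : 0 < cyc (b j1) (a i2) (b j2) by apply: cyc_gt0.
have c3 : 0 < cyc (a i1) (b j1) (a i2) by apply: cyc_gt0.
have c4 : cyc (a i1) (b j2) (a i2) < 0 by apply: cyc_lt0; [lra| rewrite o3 orbT].
set oA := orient (B j1) (B j2) (A i1) in eA.
set oA' := orient (B j1) (B j2) (A i2) in eA'.
set oB := orient (A i1) (A i2) (B j1) in eB.
set oB' := orient (A i1) (A i2) (B j2) in eB'.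
have sA : oA < 0 by rewrite eA pmulr_rlt0.
have sA' : 0 < oA' by rewrite eA' pmulr_rgt0.
have sB : 0 < oB by rewrite eB pmulr_rgt0.
have sB' : oB' < 0 by rewrite eB' pmulr_rlt0.
have d1 : oA - oA' != 0 by apply/negP => /eqP; lra.
have d2 : oB - oB' != 0 by apply/negP => /eqP; lra.
have [e1 e2] := cross_pt d1 d2.
set l := oA / (oA - oA') in e1 e2.
set m := oB / (oB - oB') in e1 e2.
have frac : forall u v : R, u < 0 -> 0 < v -> 0 <= u / (u - v) <= 1.
  move=> u v hu hv.
  have -> : u / (u - v) = (- u) / (v - u).
    have -> : u - v = - (v - u) by ring.
    by rewrite invrN mulrN mulNr.
  have hd : 0 < v - u by lra.
  apply/andP; split; first by apply: divr_ge0; lra.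
  rewrite ler_pdivrMr //; lra.
have hl : 0 <= l <= 1 by apply: frac.
have hm : 0 <= m <= 1.
  have -> : m = (- oB) / (- oB - (- oB')).
    have -> : - oB - (- oB') = - (oB - oB') by ring.
    by rewrite /m invrN mulrN mulNr opprK.
  apply: frac; lra.
exists ((1 - l) * (A i1).1 + l * (A i2).1, (1 - l) * (A i1).2 + l * (A i2).2); split.
- exact: hull2.
- rewrite e1 e2; exact: hull2.
Qed.

Definition poleN (m : nat) : R * R := (al m%:R, be m%:R).

Lemma poleN_unit m : (poleN m).1 ^+ 2 + (poleN m).2 ^+ 2 = 1.
Proof.
rewrite /poleN /al /be /=; have h := sq1_neq0 (m%:R : R).
field; exact: h.
Qed.

Lemma al_inj (m m' : nat) : al m%:R = al m'%:R -> m = m'.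
Proof.
have ea : forall y : R, al y = 1 - 2 * (y ^+ 2 + 1)^-1.
  by move=> y; rewrite /al; field; exact: sq1_neq0.
rewrite !ea => h.
have h' : ((m%:R : R) ^+ 2 + 1)^-1 = (m'%:R ^+ 2 + 1)^-1 by lra.
move/invr_inj: h' => e.
have e2 : (m%:R : R) ^+ 2 = m'%:R ^+ 2 by lra.
move: e2; rewrite -!natrX => /eqP; rewrite eqr_nat => /eqP.
move=> e3; apply/eqP; rewrite -(eqn_exp2r _ _ (isT : (0 < 2)%N)); exact/eqP.
Qed.

Lemma pole_exists (T : finType) k (P : T -> 'I_k -> R * R) (c : R * R) (r : R) :
  0 < r ->
  exists n : R * R, n.1 ^+ 2 + n.2 ^+ 2 = 1 /\
    forall x t, P x t != (c.1 + r * n.1, c.2 + r * n.2).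
Proof.
move=> hr.
pose pole (m : nat) := (c.1 + r * (poleN m).1, c.2 + r * (poleN m).2).
set N := #|{: T * 'I_k}|.
have [m hm|hnone] := pickP (fun m : 'I_N.+1 => [forall xt : T * 'I_k, P xt.1 xt.2 != pole m]).
- exists (poleN m); split; first exact: poleN_unit.
  by move=> x t; move/forallP: hm => /(_ (x, t)).
- exfalso.
  have hex : forall m : 'I_N.+1, exists xt : T * 'I_k, P xt.1 xt.2 == pole m.
    move=> m; move: (hnone m) => /negbT; rewrite negb_forall => /existsP[xt].
    by rewrite negbK => h; exists xt.
  have [x0 _] := hex ord0.
  pose f (m : 'I_N.+1) : T * 'I_k := odflt x0 [pick xt | P xt.1 xt.2 == pole m].
  have hf : forall m, P (f m).1 (f m).2 = pole m.
    move=> m; rewrite /f; case: pickP => [xt /eqP //|h].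
    by have [xt hxt] := hex m; move: (h xt); rewrite hxt.
  have finj : injective f.
    move=> m1 m2 e; have := hf m1; rewrite e hf => /(congr1 fst) /=.
    move=> e1; have e2 : (poleN m2).1 = (poleN m1).1.
      have hr0 : r != 0 by rewrite gt_eqF.
      apply: (mulfI hr0); move/addrI: e1 => e1; by rewrite e1.
    by apply/val_inj; apply: al_inj.
  have := leq_card f finj; rewrite card_ord -/N; by rewrite ltnn.
Qed.

Lemma hull_const k (A : 'I_k -> R * R) i0 p :
  (forall t, A t = A i0) -> in_hull A p -> p = A i0.
Proof.
move=> hA [w [w0 w1 e1 e2]].
have s : forall f : R * R -> R, \sum_(t < k) w t * f (A t) = f (A i0).
  move=> f; rewrite (eq_bigr (fun t => w t * f (A i0))); last by move=> t _; rewrite hA.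
  by rewrite -mulr_suml w1 mul1r.
case: p e1 e2 => p1 p2 /= e1 e2.
rewrite (s fst) in e1; rewrite (s snd) in e2.
by case: (A i0) e1 e2 => ? ? /= -> ->.
Qed.

Lemma meet_of_notsep c n r k (A B : 'I_k -> R * R) (a b : 'I_k -> R) :
  0 < r -> n.1 ^+ 2 + n.2 ^+ 2 = 1 -> (0 < k)%N ->
  (forall t, A t = F c n r (a t)) -> (forall t, B t = F c n r (b t)) ->
  ~~ sepI (pts a) (pts b) -> exists p, in_hull A p /\ in_hull B p.
Proof.
move=> hr hn hk hA hB hns.
have nea : pts a != [::] by rewrite /pts; case: (enum 'I_k) (mem_enum 'I_k (Ordinal hk)) => //.
have neb : pts b != [::] by rewrite /pts; case: (enum 'I_k) (mem_enum 'I_k (Ordinal hk)) => //.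
have [q hq hqa] := notsep_witness hns.
have [p hp hpb] : exists2 p, p \in pts a & mn (pts b) <= p <= mx (pts b).
  by apply: notsep_witness; rewrite sepIC.
have [j ej] := pts_memP hq; have [i ei] := pts_memP hp.
have [i1 ei1] := pts_memP (mn_mem nea); have [i2 ei2] := pts_memP (mx_mem nea).
have [j1 ej1] := pts_memP (mn_mem neb); have [j2 ej2] := pts_memP (mx_mem neb).
rewrite ej ei1 ei2 in hqa; rewrite ei ej1 ej2 in hpb.
move: hqa hpb => /andP[q1 q2] /andP[p1 p2].
have shared : forall i' j', a i' = b j' -> exists p, in_hull A p /\ in_hull B p.
  move=> i' j' e; exists (A i'); split; first exact: hull1.
  by rewrite hA e -hB; exact: hull1.
have [h1|h1|h1] := ltgtP (a i1) (b j); last exact: shared h1; last first.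
  by exfalso; lra.
have [h2|h2|h2] := ltgtP (b j) (a i2); last exact: shared (esym h2); last first.
  by exfalso; lra.
have [h3|h3|h3] := ltgtP (b j1) (a i); last exact: shared (esym h3); last first.
  by exfalso; lra.
have [h4|h4|h4] := ltgtP (a i) (b j2); last exact: shared h4; last first.
  by exfalso; lra.
have [h5|h5|h5] := ltgtP (a i1) (b j1); last exact: shared h5.
- exact: (interleave_meet hr hn hA hB h5 h3 h4).
- have [p0 [hp1 hp2]] := interleave_meet hr hn hB hA h5 h1 h2.
  by exists p0.
Qed.

Lemma bridge (T : finType) (e : rel T) k : (0 < k)%N -> k_polygon_circle k e ->
  exists tau0 : T -> 'I_k -> R,
    (forall x y, x != y -> e x y -> ~~ sepI (pts (tau0 x)) (pts (tau0 y))) /\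
    (forall x y, x != y -> ~~ e x y -> sepI (pts (tau0 x)) (pts (tau0 y))).
Proof.
move=> hk [c [r [P [hr hinj hcirc he]]]].
have [n [hn hpole]] := pole_exists P c hr.
exists (fun x t => tau c n r (P x t)).
have hP : forall x t, P x t = F c n r (tau c n r (P x t)).
  by move=> x t; apply: circle_param.
split.
- move=> x y hxy exy; apply/negP => hs.
  have [p [hpx hpy]] := (he x y hxy).1 exy.
  have [k1|k1] := ltnP 1 k.
  + have nd : forall z, mn (pts (fun t => tau c n r (P z t))) < mx (pts (fun t => tau c n r (P z t))).
      move=> z; set a := (fun t => tau c n r (P z t)).
      pose i0 : 'I_k := Ordinal hk; pose i1 : 'I_k := Ordinal k1.
      have ne : a i0 != a i1.
        apply/negP => /eqP h.
        have : P z i0 = P z i1 by rewrite hP (hP z i1); rewrite /a in h; rewrite h.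
        by move/hinj.
      have l0 := mn_le (pts_mem a i0); have l1 := mn_le (pts_mem a i1).
      have u0 := mx_ge (pts_mem a i0); have u1 := mx_ge (pts_mem a i1).
      rewrite lt_neqAle; apply/andP; split; last by apply: le_trans u0.
      apply/negP => /eqP he0; move/negP: ne; apply; apply/eqP.
      apply: le_anti; apply/andP; split; lra.
    case/orP: hs => hs.
    * exact: (sep_disjoint1 hr hn (hP x) (hP y) (nd x) hs hpx hpy).
    * exact: (sep_disjoint1 hr hn (hP y) (hP x) (nd y) hs hpy hpx).
  + have k1' : k = 1%N by apply/eqP; rewrite eqn_leq k1 hk.
    pose i0 : 'I_k := Ordinal hk.
    have hall : forall t : 'I_k, t = i0.
      by move=> t; apply/val_inj; rewrite /= ; case: t => m hm /=; move: hm; rewrite k1'; case: m.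
    have ex := hull_const (fun t => congr1 (P x) (hall t)) hpx.
    have ey := hull_const (fun t => congr1 (P y) (hall t)) hpy.
    apply: (sepI_disj hs (pts_mem _ i0)).
    by rewrite ex in ey; rewrite ey; apply: pts_mem.
- move=> x y hxy nexy; apply/negPn/negP => hns.
  move/negP: nexy; apply; apply/(he x y hxy).
  exact: (meet_of_notsep hr hn hk (hP x) (hP y) hns).
Qed.

End PGeo.
Import PGeo.

Module PGraph.

Definition lab n (x : 'I_(6 * n)) : nat := (val x).+1.
Definition pr (a b u v : nat) : bool := ((a == u) && (b == v)) || ((a == v) && (b == u)).
Definition CE (n i j a b : nat) : bool :=
  (Medge n a b && ~~ (pr a b (4 * n + j) (5 * n + j) || pr a b (4 * n + i) (5 * n + i)))
  || pr a b (4 * n + j) (5 * n + i) || pr a b (4 * n + i) (5 * n + j).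

Lemma lab_inj n : injective (@lab n).
Proof. by move=> x y /succn_inj /val_inj. Qed.

Section Cross.
Variables (n i j : nat).
Hypotheses (hn : (0 < n)%N) (hi : (1 <= i <= n)%N) (hj : (1 <= j <= n)%N) (hij : i != j).

Lemma lab_sig4 (u : 'I_(6 * n)) : lab u = 4 * n + j -> lab (sigma_ij n i j u) = 4 * n + i.
Proof.
rewrite /lab /sigma_ij /liftv => hu; rewrite hu val_insubd.
rewrite /sigma_inv_nat /sigma_nat.
have -> : (4 * n + j == 5 * n + j) = false by apply/eqP; lia.
rewrite eqxx.
have -> : (5 * n + 1 == 4 * n + 1) = false by apply/eqP; lia.
rewrite eqxx.
have -> : ((4 * n + i).-1 < 6 * n)%N by lia.
lia.
Qed.

Lemma lab_sig5 (u : 'I_(6 * n)) : lab u = 5 * n + j -> lab (sigma_ij n i j u) = 5 * n + i.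
Proof.
rewrite /lab /sigma_ij /liftv => hu; rewrite hu val_insubd.
rewrite /sigma_inv_nat /sigma_nat eqxx eqxx.
have -> : ((5 * n + i).-1 < 6 * n)%N by lia.
lia.
Qed.

Lemma Hlab k (u v : 'I_(6 * n)) : H n k u v = pr (lab u) (lab v) (4 * n + k) (5 * n + k).
Proof. by rewrite /H /pr /lab /= [X in _ || X]andbC. Qed.

Definition mkv (L : nat) (h : (L.-1 < 6 * n)%N) : 'I_(6 * n) := Ordinal h.
Lemma lab_mkv L h : (0 < L)%N -> lab (@mkv L h) = L.
Proof. by move=> hL; rewrite /lab /mkv /= prednK. Qed.

Lemma crossing_eq (x y : 'I_(6 * n)) :
  crossing (M n) (H n j) (H n i) (sigma_ij n i j) x y = CE n i j (lab x) (lab y).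
Proof.
rewrite /crossing /CE.
have hv4j : ((4 * n + j).-1 < 6 * n)%N by lia.
have hv5j : ((5 * n + j).-1 < 6 * n)%N by lia.
set aj := mkv hv4j; set bj := mkv hv5j.
have laj : lab aj = 4 * n + j by apply: lab_mkv; lia.
have lbj : lab bj = 5 * n + j by apply: lab_mkv; lia.
have sig : forall u v, H n j u v ->
   ((lab u = 4 * n + j /\ lab v = 5 * n + j) \/ (lab u = 5 * n + j /\ lab v = 4 * n + j)) /\
       H n i (sigma_ij n i j u) (sigma_ij n i j v).
  move=> u v; rewrite Hlab /pr => /orP[] /andP[/eqP hu /eqP hv].
  - split; [by left|].
    by rewrite Hlab (lab_sig4 hu) (lab_sig5 hv) /pr !eqxx.
  - split; [by right|].
    by rewrite Hlab (lab_sig5 hu) (lab_sig4 hv) /pr !eqxx orbT.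
have Hj_ajbj : H n j aj bj by rewrite Hlab laj lbj /pr !eqxx.
have Hj_bjaj : H n j bj aj by rewrite Hlab laj lbj /pr !eqxx orbT.
have lsa := lab_sig4 laj; have lsb := lab_sig5 lbj.
have [_ Hi1] := sig _ _ Hj_ajbj.
have [_ Hi2] := sig _ _ Hj_bjaj.
have rem : [exists u, exists v, [&& H n j u v, H n i (sigma_ij n i j u) (sigma_ij n i j v)
              & ((x == u) && (y == v)) || ((x == sigma_ij n i j u) && (y == sigma_ij n i j v))]]
     = pr (lab x) (lab y) (4 * n + j) (5 * n + j) || pr (lab x) (lab y) (4 * n + i) (5 * n + i).
  apply/existsP/idP.
  - case=> u /existsP[v /and3P[hH _ hxy]].
    have [hc _] := sig _ _ hH.
    have s1 := @lab_sig4 u; have s2 := @lab_sig5 u; have s3 := @lab_sig4 v; have s4 := @lab_sig5 v.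
    case/orP: hxy => /andP[/eqP-> /eqP->]; rewrite /pr.
    + by case: hc => [[-> ->]|[-> ->]]; rewrite !eqxx ?orbT.
    + case: hc => [[h1 h2]|[h1 h2]].
      * by rewrite (s1 h1) (s4 h2) !eqxx ?orbT.
      * by rewrite (s2 h1) (s3 h2) !eqxx ?orbT.
  - rewrite /pr => /orP[] /orP[] /andP[/eqP hx /eqP hy].
    + exists aj; apply/existsP; exists bj; rewrite Hj_ajbj Hi1 /=.
      by rewrite -(lab_inj (etrans hx (esym laj))) -(lab_inj (etrans hy (esym lbj))) !eqxx.
    + exists bj; apply/existsP; exists aj; rewrite Hj_bjaj Hi2 /=.
      by rewrite -(lab_inj (etrans hx (esym lbj))) -(lab_inj (etrans hy (esym laj))) !eqxx.
    + exists aj; apply/existsP; exists bj; rewrite Hj_ajbj Hi1 /=.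
      by rewrite -(lab_inj (etrans hx (esym lsa))) -(lab_inj (etrans hy (esym lsb))) !eqxx orbT.
    + exists bj; apply/existsP; exists aj; rewrite Hj_bjaj Hi2 /=.
      by rewrite -(lab_inj (etrans hx (esym lsb))) -(lab_inj (etrans hy (esym lsa))) !eqxx orbT.
have add : [exists u, exists v, [&& H n j u v, H n i (sigma_ij n i j u) (sigma_ij n i j v)
              & ((x == u) && (y == sigma_ij n i j v)) || ((x == sigma_ij n i j u) && (y == v))]]
     = pr (lab x) (lab y) (4 * n + j) (5 * n + i) || pr (lab x) (lab y) (4 * n + i) (5 * n + j).
  apply/existsP/idP.
  - case=> u /existsP[v /and3P[hH _ hxy]].
    have [hc _] := sig _ _ hH.
    have s1 := @lab_sig4 u; have s2 := @lab_sig5 u; have s3 := @lab_sig4 v; have s4 := @lab_sig5 v.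
    case/orP: hxy => /andP[/eqP-> /eqP->]; rewrite /pr.
    + case: hc => [[h1 h2]|[h1 h2]].
      * by rewrite h1 (s4 h2) !eqxx ?orbT.
      * by rewrite h1 (s3 h2) !eqxx ?orbT.
    + case: hc => [[h1 h2]|[h1 h2]].
      * by rewrite h2 (s1 h1) !eqxx ?orbT.
      * by rewrite h2 (s2 h1) !eqxx ?orbT.
  - rewrite /pr => /orP[] /orP[] /andP[/eqP hx /eqP hy].
    + exists aj; apply/existsP; exists bj; rewrite Hj_ajbj Hi1 /=.
      by rewrite -(lab_inj (etrans hx (esym laj))) -(lab_inj (etrans hy (esym lsb))) !eqxx.
    + exists bj; apply/existsP; exists aj; rewrite Hj_bjaj Hi2 /=.
      by rewrite -(lab_inj (etrans hx (esym lsb))) -(lab_inj (etrans hy (esym laj))) !eqxx orbT.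
    + exists aj; apply/existsP; exists bj; rewrite Hj_ajbj Hi1 /=.
      by rewrite -(lab_inj (etrans hx (esym lsa))) -(lab_inj (etrans hy (esym lbj))) !eqxx orbT.
    + exists bj; apply/existsP; exists aj; rewrite Hj_bjaj Hi2 /=.
      by rewrite -(lab_inj (etrans hx (esym lbj))) -(lab_inj (etrans hy (esym lsa))) !eqxx.
rewrite rem add /M /lab -orbA.
done.
Qed.
End Cross.

Definition G (n a b m : nat) : bool :=
  [|| (a == 4 * m - 3) && (b == 4 * n + m), (a == 4 * m - 2) && (b == 5 * n + m)
    | (a == 4 * n + m) && (b == 5 * n + m)].

Lemma Medge_dirE n a b : Medge_dir n a b =
  ((1 <= a) && (a < 4 * n) && (b == a.+1)) || has (G n a b) (iota 1 n).
Proof. by []. Qed.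

Lemma Medge_path n a b : (1 <= a < 4 * n)%N -> b = a.+1 -> Medge n a b.
Proof. by move=> /andP[h1 h2] ->; rewrite /Medge Medge_dirE h1 h2 eqxx. Qed.

Lemma Medge_gad n a b m : (1 <= m <= n)%N -> G n a b m -> Medge n a b /\ Medge n b a.
Proof.
move=> hm hg.
have h : has (G n a b) (iota 1 n) by apply/hasP; exists m => //; rewrite mem_iota; lia.
by rewrite /Medge !Medge_dirE h /= !orbT.
Qed.

Lemma Medge_false n a b :
  ~~ ((1 <= a < 4 * n) && (b == a.+1))%N -> ~~ ((1 <= b < 4 * n) && (a == b.+1))%N ->
  (forall m, (1 <= m <= n)%N -> ~~ G n a b m) -> (forall m, (1 <= m <= n)%N -> ~~ G n b a m) ->
  Medge n a b = false.
Proof.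
move=> h1 h2 h3 h4; rewrite /Medge !Medge_dirE.
have -> : has (G n a b) (iota 1 n) = false.
  by apply/negbTE/hasPn => m; rewrite mem_iota => hm; apply: h3; lia.
have -> : has (G n b a) (iota 1 n) = false.
  by apply/negbTE/hasPn => m; rewrite mem_iota => hm; apply: h4; lia.
by rewrite !orbF; apply/negbTE; rewrite negb_or h1 h2.
Qed.

Lemma pr_sym a b u v : pr a b u v = pr b a u v.
Proof. by rewrite /pr orbC; congr (_ || _); rewrite andbC. Qed.

Lemma CE_sym n i j a b : CE n i j a b = CE n i j b a.
Proof. by rewrite /CE /Medge (orbC (Medge_dir n a b)) !(pr_sym a b). Qed.

Lemma CE_swap n i j a b : CE n i j a b = CE n j i a b.
Proof.
rewrite /CE.
case: (pr a b (4 * n + j) (5 * n + j)); case: (pr a b (4 * n + i) (5 * n + i));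
case: (pr a b (4 * n + j) (5 * n + i)); case: (pr a b (4 * n + i) (5 * n + j));
by rewrite ?orbT ?orbF ?andbT ?andbF.
Qed.

Lemma CE_nonadj n i j a b : Medge n a b = false -> ~~ pr a b (4 * n + j) (5 * n + i) ->
  ~~ pr a b (4 * n + i) (5 * n + j) -> CE n i j a b = false.
Proof. by rewrite /CE => -> /negbTE -> /negbTE ->. Qed.

Lemma CE_keep n i j a b : Medge n a b -> ~~ pr a b (4 * n + j) (5 * n + j) ->
  ~~ pr a b (4 * n + i) (5 * n + i) -> CE n i j a b.
Proof. by rewrite /CE => -> /negbTE -> /negbTE ->. Qed.

Lemma CE_add1 n i j a b : pr a b (4 * n + j) (5 * n + i) -> CE n i j a b.
Proof. by rewrite /CE => ->; rewrite !orbT. Qed.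
Lemma CE_add2 n i j a b : pr a b (4 * n + i) (5 * n + j) -> CE n i j a b.
Proof. by rewrite /CE => ->; rewrite !orbT. Qed.

Ltac nonadj := apply/negbT; apply: CE_nonadj;
  [apply: Medge_false; [lia|lia|move=> ? ?; rewrite /G; lia|move=> ? ?; rewrite /G; lia]
  | rewrite /pr; lia | rewrite /pr; lia].

End PGraph.
Import PGraph.

Module PMain.
Local Notation R := Rdefinitions.R.

Ltac nonadj := apply/negbT; apply: CE_nonadj;
  [apply: Medge_false; [lia|lia|move=> ? ?; rewrite /G; lia|move=> ? ?; rewrite /G; lia]
  | rewrite /pr; lia | rewrite /pr; lia].
Lemma CE_rem n i j a b : pr a b (4 * n + j) (5 * n + j) || pr a b (4 * n + i) (5 * n + i) ->
  ~~ pr a b (4 * n + j) (5 * n + i) -> ~~ pr a b (4 * n + i) (5 * n + j) -> CE n i j a b = false.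
Proof. by rewrite /CE => -> /negbTE -> /negbTE ->; rewrite andbF. Qed.
Ltac remadj := apply/negbT; apply: CE_rem; rewrite /pr; lia.
Ltac padj := apply: CE_keep; [apply: Medge_path; lia | rewrite /pr; lia | rewrite /pr; lia].
Lemma Medge_gad1 n a b m : (1 <= m <= n)%N -> G n a b m -> Medge n a b.
Proof. by move=> h1 h2; have [] := Medge_gad h1 h2. Qed.
Lemma Medge_gad2 n a b m : (1 <= m <= n)%N -> G n b a m -> Medge n a b.
Proof. by move=> h1 h2; have [] := Medge_gad h1 h2. Qed.
Ltac gadj m := apply: CE_keep; [first [apply: (@Medge_gad1 _ _ _ m); [lia | rewrite /G; lia]
                                      |apply: (@Medge_gad2 _ _ _ m); [lia | rewrite /G; lia]]
   | rewrite /pr; lia | rewrite /pr; lia].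

Lemma path_iota (P : nat -> nat -> bool) m len :
  (forall t, (m <= t < m + len)%N -> P t t.+1) -> path P m (iota m.+1 len).
Proof.
elim: len m => [//|len IH] m h /=.
apply/andP; split; first by apply: h; lia.
apply: IH => t ht; apply: h; lia.
Qed.

Lemma sub_notsep (P P' Q : seq R) : ~~ sepI P' Q -> P' != [::] -> Q != [::] ->
  {subset P' <= P} -> ~~ sepI P Q.
Proof.
move=> h hP hQ hs; apply: contra h => hs'.
exact: (sepI_sub hP hQ hs (fun x (hx : x \in Q) => hx) hs').
Qed.

Lemma main n i j k (e : rel 'I_(6 * n)) : (2 < n)%N -> (0 < k)%N -> (1 <= j)%N -> (j < i)%N -> (i <= n)%N ->
  (forall x y, e x y = CE n i j (lab x) (lab y)) -> ~ k_polygon_circle k e.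
Proof.
move=> hn hk hj hji hin he hpc.
have [tau0 [hadj hnon]] := bridge hk hpc.
have h0 : (0 < 6 * n)%N by lia.
pose v0 : 'I_(6 * n) := Ordinal h0.
pose V (L : nat) : 'I_(6 * n) := insubd v0 L.-1.
have labV : forall L, (1 <= L <= 6 * n)%N -> lab (V L) = L.
  move=> L hL; rewrite /lab /V val_insubd.
  have -> : (L.-1 < 6 * n)%N by lia.
  lia.
pose f (L : nat) : seq R := pts (tau0 (V L)).
have fne : forall L, f L != [::].
  by move=> L; rewrite /f /pts; case: (enum 'I_k) (mem_enum 'I_k (Ordinal hk)).
have ADJ : forall L1 L2, (1 <= L1 <= 6 * n)%N -> (1 <= L2 <= 6 * n)%N -> L1 != L2 ->
    CE n i j L1 L2 -> ~~ sepI (f L1) (f L2).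
  move=> L1 L2 h1 h2 hne hce; apply: hadj.
  - apply/negP => /eqP hv; move/negP: hne; apply; apply/eqP.
    by rewrite -(labV _ h1) -(labV _ h2) hv.
  - by rewrite he (labV _ h1) (labV _ h2).
have NON : forall L1 L2, (1 <= L1 <= 6 * n)%N -> (1 <= L2 <= 6 * n)%N -> L1 != L2 ->
    ~~ CE n i j L1 L2 -> sepI (f L1) (f L2).
  move=> L1 L2 h1 h2 hne hce; apply: hnon.
  - apply/negP => /eqP hv; move/negP: hne; apply; apply/eqP.
    by rewrite -(labV _ h1) -(labV _ h2) hv.
  - by rewrite he (labV _ h1) (labV _ h2).
have STAR : forall l Xs Xr, (1 <= l <= 6 * n)%N -> (1 <= Xs <= 6 * n)%N -> (1 <= Xr <= 6 * n)%N ->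
    l != Xs -> l != 4 * j - 2 -> l != Xr -> Xs != 4 * j - 2 -> 4 * j - 2 != Xr ->
    ~~ CE n i j l Xs -> ~~ CE n i j l (4 * j - 2) -> ~~ CE n i j l Xr ->
    CE n i j Xs (4 * j - 2) -> CE n i j (4 * j - 2) Xr -> sepI (f l) (f Xs ++ f Xr).
  move=> l Xs Xr hl hs hr d1 d2 d3 d4 d5 c1 c2 c3 c4 c5.
  have hA : (1 <= 4 * j - 2 <= 6 * n)%N by lia.
  apply: (@star_sep (f l) (f Xs) (f (4 * j - 2)) (f Xr)); try exact: fne.
  - exact: ADJ.
  - exact: ADJ.
  - exact: NON.
  - exact: NON.
  - exact: NON.
have W1s : sepI (flatten (map f [:: 4 * i - 3; 4 * i - 2; 5 * n + i; 4 * n + j])) (f (5 * n + j) ++ f (4 * j - 1)).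
  apply: chain_sep => //; first by case: (f (5 * n + j)) (fne (5 * n + j)).
  - rewrite /= andbT; apply/and3P; split.
    + apply: ADJ; try lia. padj.
    + apply: ADJ; try lia. gadj i.
    + apply: ADJ; try lia. apply: CE_add1; rewrite /pr; lia.
  - rewrite /= andbT; apply/and4P; split; (apply: STAR; [lia|lia|lia|lia|lia|lia|lia|lia|first [nonadj|remadj]|nonadj|nonadj|gadj j|padj]).
have W2s : sepI (flatten (map f [:: 4 * i - 3; 4 * n + i])) (f (4 * j - 3) ++ f (4 * j - 1)).
  apply: chain_sep => //; first by case: (f (4 * j - 3)) (fne (4 * j - 3)).
  - rewrite /= andbT; apply: ADJ; try lia. gadj i.
  - rewrite /= andbT; apply/andP; split; (apply: STAR; [lia|lia|lia|lia|lia|lia|lia|lia|first [nonadj|remadj]|nonadj|nonadj|padj|padj]).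
have W3s : sepI (flatten (map f (iota (4 * j) (4 * i - 4 * j - 2)))) (f (4 * j - 3) ++ f (5 * n + j)).
  have -> : (4 * i - 4 * j - 2 = (4 * i - 4 * j - 3).+1)%N by lia.
  apply: chain_sep => //; first by case: (f (4 * j - 3)) (fne (4 * j - 3)).
  - apply: path_iota => t ht; apply: ADJ; try lia. padj.
  - apply/allP => l; rewrite inE mem_iota => hl.
    have hl' : (4 * j <= l <= 4 * i - 3)%N by lia.
    apply: STAR; [lia|lia|lia|lia|lia|lia|lia|lia|nonadj|nonadj|nonadj|padj|gadj j].
have inW : forall (x : R) L (ls : seq nat), x \in f L -> L \in ls -> x \in flatten (map f ls).
  by move=> x L ls hx hL; apply/flattenP; exists (f L) => //; apply: map_f.
have subW : forall L (ls : seq nat), L \in ls -> {subset f L <= flatten (map f ls)}.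
  by move=> L ls hL x hx; apply: inW hL.
set b := head 0%R (f (4 * i - 3)).
have hb : b \in f (4 * i - 3) by rewrite /b; case: (f (4 * i - 3)) (fne (4 * i - 3)) => // ? ? _; exact: mem_head.
have neW : forall ls : seq nat, ls != [::] -> flatten (map f ls) != [::].
  move=> [//|L ls] _ /=; by case: (f L) (fne L).
apply: (core (X1 := f (4 * j - 3)) (X2 := f (5 * n + j)) (X3 := f (4 * j - 1)) (b := b)
         (fne _) (fne _) (fne _) _ _ _ W1s W2s W3s).
- apply: (inW _ _ _ hb); by rewrite !inE eqxx.
- apply: (inW _ _ _ hb); by rewrite !inE eqxx.
- apply: (inW _ _ _ hb); rewrite mem_iota; lia.
- have hc : ~~ sepI (f (4 * n + j)) (f (4 * j - 3)) by apply: ADJ; try lia; gadj j.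
  apply: (sub_notsep hc (fne _) (fne _)); apply: subW; by rewrite !inE eqxx ?orbT.
- have hc : ~~ sepI (f (4 * n + i)) (f (5 * n + j)).
    by apply: ADJ; try lia; apply: CE_add2; rewrite /pr; lia.
  apply: (sub_notsep hc (fne _) (fne _)); apply: subW; by rewrite !inE eqxx ?orbT.
- have hc : ~~ sepI (f (4 * j)) (f (4 * j - 1)) by apply: ADJ; try lia; rewrite CE_sym; padj.
  apply: (sub_notsep hc (fne _) (fne _)); apply: subW; rewrite mem_iota; lia.
- move=> x h1 h2; apply: (sepI_disj (NON (4 * j - 3) (5 * n + j) _ _ _ _) h1 h2); try lia; nonadj.
- move=> x h1 h2; apply: (sepI_disj (NON (4 * j - 3) (4 * j - 1) _ _ _ _) h1 h2); try lia; nonadj.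
- move=> x h1 h2; apply: (sepI_disj (NON (5 * n + j) (4 * j - 1) _ _ _ _) h1 h2); try lia; nonadj.
Qed.


End PMain.
Import PMain.

Theorem lemma7 (n : nat) (hn : 2 < n) (k : nat) (hk : 0 < k) (i j : nat)
  (hi : 1 <= i <= n) (hj : 1 <= j <= n) (hij : i != j) :
  ~ k_polygon_circle k (crossing (M n) (H n j) (H n i) (sigma_ij n i j)).
Proof.
have hn0 : (0 < n)%N by lia.
have he := crossing_eq hn0 hi hj hij.
case: (ltngtP i j) => h.
- apply: (@main n j i k) => //; try lia.
  by move=> x y; rewrite he CE_swap.
- apply: (@main n i j k) => //; lia.
- by move: hij; rewrite h eqxx.
Qed.
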